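(* Let $m,k,n\ge1$ be integers; let $\lambda_i,\mu_i>0$ ($i\le k$), $\alpha_j,\beta_j,u_j,v_j>0$ ($j\le n$); let $\theta:\{0,\dots,m\}\to\mathbb{R}$ satisfy $0\le\theta\le1$, $\theta(b)>0$ for $b<m$, $\theta(m)=0$. Consider the CTMC on the set of vectors $w=(x_1,\dots,x_k;a_1,\dots,a_n)$, $x_i\in\mathbb{Z}_{\ge0}$, $a_j\in\{I,W,T\}$, with $\mathrm{busy}(w)=\sum_i x_i+\sum_j1_{\{a_j=T\}}\le m$, whose only nonzero rates are: $x\to x+e_i$ at rate $\lambda_i\theta(\mathrm{busy}(w))$ and $x+e_i\to x$ at rate $(x_i+1)\mu_i$; and, for each $j$ changing only $a_j$: $I\to W$ at rate $\alpha_j$, $W\to I$ at rate $\beta_j$, $W\to T$ at rate $u_j\theta(\mathrm{busy}(w))$ ($w$ the current state), $T\to W$ at rate $v_j$. Its steady state distribution has the form $p(w)=B\big(\prod_{r=0}^{\mathrm{busy}(w)-1}\theta(r)\big)\big(\prod_{i}\rho_i^{x_i}/x_i!\big)\prod_j(\alpha_j/\beta_j)^{1_{\{a_j=W\}}}(\alpha_ju_j/(\beta_jv_j))^{1_{\{a_j=T\}}}$, $\rho_i=\lambda_i/\mu_i$, with normalizing constant $B$. Let $\rho=\sum_{i=1}^k\rho_i$ and $\mathrm{i}=\sqrt{-1}$. For $j\in\{1,\dots,n\}$ let $P[I_j]$ be the steady state probability that $a_j=I$, and define $$c_{j,b}=\frac1n\sum_{t=0}^{n-1}\prod_{l\in\{1,\dots,n\}\setminus\{j\}}\Big[1+\frac{\alpha_l}{\beta_l}+e^{\frac{-2\pi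 \mathrm{i} t}{n}}\frac{\alpha_lu_l}{\beta_lv_l}\Big]e^{\frac{2\pi \mathrm{i} tb}{n}}\qquad\forall b\in\{0,1,\dots,\min[n-1,m]\}.$$ Then $$P[I_j]=B\sum_{b=0}^{\min[n-1,m]}\sum_{x=0}^{m-b}\Big(\prod_{r=0}^{x+b-1}\theta(r)\Big)\frac{\rho^x}{x!}c_{j,b}.$$ In the special case with no non-persistent users (i.e. $\rho\to0$), $$P[I_j]=\tilde B\sum_{b=0}^{\min[n-1,m]}\Big(\prod_{r=0}^{b-1}\theta(r)\Big)c_{j,b},$$ where $\tilde B$ is the normalizing constant of that special case.
   Context: Multi-channel access model with $m$ channels, $k$ classes of non-persistent users and $n$ persistent users with activity states Idle ($I$), Waiting ($W$), Transmitting ($T$). Empty products $\prod_{r=0}^{-1}\theta(r)$ equal $1$. In the case with no non-persistent users, the steady state probability of persistent configuration $a$ (with $\sum_j1_{\{a_j=T\}}\le m$) is $\tilde B\big(\prod_{r=0}^{\sum_j1_{\{a_j=T\}}-1}\theta(r)\big)\prod_j(\alpha_j/\beta_j)^{1_{\{a_j=W\}}}(\alpha_ju_j/(\beta_jv_j))^{1_{\{a_j=T\}}}$. *)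

(* Defs.v *)
From HB Require Import structures.
From mathcomp Require Import all_boot all_order all_algebra.
From mathcomp Require Import reals trigo complex.
Set Implicit Arguments.
Unset Strict Implicit.
Unset Printing Implicit Defensive.
Import Order.TTheory GRing.Theory Num.Theory.
Local Open Scope ring_scope.

Definition Idle  : 'I_3 := @Ordinal 3 0 isT.
Definition Wait  : 'I_3 := @Ordinal 3 1 isT.
Definition Trans : 'I_3 := @Ordinal 3 2 isT.

Section Model.
Variables (R : realType) (m k n : nat).
Variables (lam mu : 'I_k -> R) (alpha beta u v : 'I_n -> R) (theta : nat -> R).

(* A state w = (x ; a).  Since busy(w) <= m, every x_i <= m, so x_i : 'I_m.+1
   loses no state. *)
Definition busy (x : {ffun 'I_k -> 'I_m.+1}) (a : {ffun 'I_n -> 'I_3}) : nat :=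
  (\sum_(i < k) (x i : nat) + \sum_(j < n) (a j == Trans))%N.

Definition rho_i (i : 'I_k) : R := lam i / mu i.

Definition weight (x : {ffun 'I_k -> 'I_m.+1}) (a : {ffun 'I_n -> 'I_3}) : R :=
  (\prod_(r < busy x a) theta r)
  * (\prod_(i < k) ((rho_i i) ^+ (x i) / ((x i)`!)%:R))
  * \prod_(j < n) ((alpha j / beta j) ^+ (a j == Wait)
                   * (alpha j * u j / (beta j * v j)) ^+ (a j == Trans)).

Definition Bconst : R :=
  (\sum_(x : {ffun 'I_k -> 'I_m.+1})
     \sum_(a : {ffun 'I_n -> 'I_3} | (busy x a <= m)%N) weight x a)^-1.

Definition PIdle (j : 'I_n) : R :=
  \sum_(x : {ffun 'I_k -> 'I_m.+1})
     \sum_(a : {ffun 'I_n -> 'I_3} | (busy x a <= m)%N && (a j == Idle))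
        Bconst * weight x a.

(* Special case without non-persistent users: states are just a. *)
Definition busyT (a : {ffun 'I_n -> 'I_3}) : nat := (\sum_(j < n) (a j == Trans))%N.

Definition weight0 (a : {ffun 'I_n -> 'I_3}) : R :=
  (\prod_(r < busyT a) theta r)
  * \prod_(j < n) ((alpha j / beta j) ^+ (a j == Wait)
                   * (alpha j * u j / (beta j * v j)) ^+ (a j == Trans)).

Definition Btilde : R :=
  (\sum_(a : {ffun 'I_n -> 'I_3} | (busyT a <= m)%N) weight0 a)^-1.

Definition PIdle0 (j : 'I_n) : R :=
  \sum_(a : {ffun 'I_n -> 'I_3} | (busyT a <= m)%N && (a j == Idle))
     Btilde * weight0 a.

Local Open Scope complex_scope.

Definition cexp (y : R) : R[i] := (cos y +i* sin y)%C.

Definition c_coef (j : 'I_n) (b : nat) : R[i] :=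
  (n%:R)^-1 * \sum_(t < n)
     (\prod_(l < n | l != j)
        ((1 + alpha l / beta l)%:C
         + cexp (- (2 * pi * t%:R / n%:R)) * (alpha l * u l / (beta l * v l))%:C))
     * cexp (2 * pi * t%:R * b%:R / n%:R).

End Model.

(* Main.v *)
Require Import Defs.
From HB Require Import structures.
From mathcomp Require Import all_boot all_order all_algebra.
From mathcomp Require Import reals trigo complex.
Import Order.TTheory GRing.Theory Num.Theory.
Local Open Scope ring_scope.
Local Open Scope complex_scope.
Lemma cexpD (R : realType) (x y : R) : cexp (x + y) = cexp x * cexp y.
Proof. by rewrite /cexp sinD cosD; simpc; rewrite [sin x * _ + _]addrC. Qed.

Lemma cexp0 (R : realType) : cexp (0 : R) = 1.
Proof. by rewrite /cexp sin0 cos0. Qed.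

Lemma cexpX (R : realType) (x : R) (d : nat) : cexp x ^+ d = cexp (x *+ d).
Proof.
elim: d => [|d IH]; first by rewrite expr0 mulr0n cexp0.
by rewrite exprS IH mulrS cexpD.
Qed.

Lemma cexp2pi (R : realType) : cexp (pi *+ 2 : R) = 1.
Proof. by rewrite /cexp cos2pi sin2pi. Qed.

Lemma cexpN2pi (R : realType) : cexp (- (pi *+ 2) : R) = 1.
Proof. by rewrite /cexp cosN sinN cos2pi sin2pi oppr0. Qed.

Lemma cexp_neq1 (R : realType) (y : R) : 0 < y < pi -> cexp (y *+ 2) != 1.
Proof.
move=> hy; apply/eqP => /(congr1 (@complex.Re R)) /=.
rewrite cos_mulr2n => /eqP; rewrite subr_eq -mulr2n => /eqP.
move/(congr1 (fun z => z / 2)); rewrite -mulr_natr mulfK ?pnatr_eq0 // divff ?pnatr_eq0 // => hc.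
have := cos2Dsin2 y; rewrite hc => h.
have /eqP : sin y ^+ 2 = 0 by apply: (@addrI _ 1); rewrite addr0.
rewrite sqrf_eq0 => /eqP hs.
by have := sin_gt0_pi hy; rewrite hs ltxx.
Qed.

From mathcomp Require Import ring lra zify.

Lemma cexp_frac_neq1 (R : realType) (c n : nat) : (0 < c < n)%N ->
  cexp ((pi * (c%:R / n%:R)) *+ 2 : R) != 1.
Proof.
case/andP => c0 cn; apply: cexp_neq1.
have n0 : (0 : R) < n%:R by rewrite ltr0n (leq_ltn_trans _ cn).
apply/andP; split.
  by apply: mulr_gt0; [exact: pi_gt0 | apply: divr_gt0; rewrite // ltr0n].
by rewrite gtr_pMr ?pi_gt0 // ltr_pdivrMr // mul1r ltr_nat.
Qed.

Lemma dft_orth (R : realType) (n b d : nat) : (b < n)%N -> (d < n)%N ->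
  ((n%:R)^-1 * \sum_(t < n) cexp (- (2 * pi * t%:R / n%:R)) ^+ d
     * cexp (2 * pi * t%:R * b%:R / n%:R) : R[i]) = (b == d)%:R.
Proof.
move=> bn dn.
have n0 : (n%:R : R) != 0 by rewrite pnatr_eq0 -lt0n (leq_ltn_trans _ bn).
have n0C : (n%:R : R[i]) != 0 by rewrite pnatr_eq0 -lt0n (leq_ltn_trans _ bn).
set z : R := 2 * pi * (b%:R - d%:R) / n%:R.
have -> : \sum_(t < n) cexp (- (2 * pi * t%:R / n%:R)) ^+ d
     * cexp (2 * pi * t%:R * b%:R / n%:R) = \sum_(t < n) cexp z ^+ t.
  apply: eq_bigr => t _; rewrite cexpX cexpX -cexpD; congr cexp.
  rewrite /z; ring.
have hzn : z *+ n = (pi *+ 2) *+ b - (pi *+ 2) *+ d.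
  rewrite /z; field; exact: n0.
case: eqP => [bd|/eqP bd].
  rewrite /z bd subrr mulr0 mul0r cexp0.
  under eq_bigr do rewrite expr1n.
  by rewrite sumr_const card_ord mulVf.
have hn1 : cexp z ^+ n = 1.
  rewrite cexpX hzn cexpD -mulNrn -(@cexpX R (pi *+ 2)) -(@cexpX R (- (pi *+ 2))) cexp2pi.
  by rewrite [cexp (- _)]cexpN2pi !expr1n mulr1.
have hz1 : cexp z != 1.
  case: (ltngtP b d) => [bd'|db|beq]; last by rewrite beq eqxx in bd.
  - apply/eqP => h1.
    have : cexp (- z) == 1.
      by rewrite -[cexp (- z)]mul1r -{1}h1 -cexpD subrr cexp0.
    have -> : - z = (pi * ((d - b)%:R / n%:R)) *+ 2.
      by rewrite /z natrB ?(ltnW bd') // ; field; exact: n0.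
    by apply/negP/cexp_frac_neq1; rewrite subn_gt0 bd' /= (leq_ltn_trans (leq_subr _ _)).
  - have -> : z = (pi * ((b - d)%:R / n%:R)) *+ 2.
      by rewrite /z natrB ?(ltnW db) // ; field; exact: n0.
    by apply/cexp_frac_neq1; rewrite subn_gt0 db /= (leq_ltn_trans (leq_subr _ _)).
have : (cexp z - 1) * \sum_(i < n) cexp z ^+ i = 0 by rewrite -subrX1 hn1 subrr.
by move/eqP; rewrite mulf_eq0 subr_eq0 (negbTE hz1) /= => /eqP ->; rewrite mulr0.
Qed.

Definition gW {R : realType} {n : nat} (alpha beta u v : 'I_n -> R) (l : 'I_n) (s : 'I_3) : R :=
  (alpha l / beta l) ^+ (s == Wait) * (alpha l * u l / (beta l * v l)) ^+ (s == Trans).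

Definition Wt {R : realType} {n : nat} (alpha beta u v : 'I_n -> R) (a : {ffun 'I_n -> 'I_3}) : R :=
  \prod_(l < n) gW alpha beta u v l (a l).

Lemma sum_I3 (T : nmodType) (f : 'I_3 -> T) : \sum_(s : 'I_3) f s = f Idle + f Wait + f Trans.
Proof.
rewrite !big_ord_recl big_ord0 addr0 addrA; congr (f _ + f _ + f _); exact: val_inj.
Qed.

Lemma prod_expand (R : realType) (n : nat) (alpha beta u v : 'I_n -> R) (w : R[i]) (j : 'I_n) :
  \prod_(l < n | l != j) ((1 + alpha l / beta l)%:C + w * (alpha l * u l / (beta l * v l))%:C)
  = \sum_(a : {ffun 'I_n -> 'I_3} | a j == Idle) (Wt alpha beta u v a)%:C * w ^+ busyT a.
Proof.
pose F := fun l (s : 'I_3) => (if l == j then (s == Idle)%:R else 1) *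
   ((gW alpha beta u v l s)%:C * w ^+ (s == Trans)).
have H1 : forall l, l != j -> \sum_s F l s = (1 + alpha l / beta l)%:C + w * (alpha l * u l / (beta l * v l))%:C.
  move=> l /negbTE lj; rewrite sum_I3 /F lj !mul1r /gW /=.
  by rewrite !expr0 !expr1 !mulr1 !mul1r rmorphD [w * _]mulrC.
have H2 : \sum_s F j s = 1.
  by rewrite sum_I3 /F eqxx /gW /= !mul0r !addr0 !expr0 !mulr1 rmorph1.
have -> : \prod_(l < n | l != j) ((1 + alpha l / beta l)%:C + w * (alpha l * u l / (beta l * v l))%:C)
   = \prod_l \sum_s F l s.
  rewrite [RHS](bigD1 j) // H2 /= mul1r; apply: eq_bigr => l lj; by rewrite H1.
rewrite bigA_distr_bigA /=.
rewrite [RHS]big_mkcond; apply: eq_bigr => a _.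
rewrite big_split /= (bigD1 j) //= big1 => [|l /negbTE lj]; last by rewrite lj.
rewrite eqxx mulr1 big_split /= prodrXr -rmorph_prod.
by case: (a j == Idle); rewrite ?mul1r ?mul0r.
Qed.

Lemma busyT_lt (n : nat) (a : {ffun 'I_n -> 'I_3}) (j : 'I_n) :
  a j == Idle -> (busyT a < n)%N.
Proof.
move/eqP => aj; rewrite /busyT (bigD1 j) //= aj /=.
have : (\sum_(l < n | l != j) (a l == Trans) <= \sum_(l < n | l != j) 1)%N.
  by apply: leq_sum => l _; case: (a l == Trans).
rewrite sum1_card cardC1 card_ord add0n => h.
apply: (leq_ltn_trans h); rewrite ltn_predL; exact: (leq_ltn_trans (leq0n j) (ltn_ord j)).
Qed.

Definition Eb {R : realType} {n : nat} (alpha beta u v : 'I_n -> R) (j : 'I_n) (b : nat) : R :=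
  \sum_(a : {ffun 'I_n -> 'I_3} | (a j == Idle) && (busyT a == b)) Wt alpha beta u v a.

Lemma c_coefE (R : realType) (n : nat) (alpha beta u v : 'I_n -> R) (j : 'I_n) (b : nat) :
  (b < n)%N -> c_coef alpha beta u v j b = (Eb alpha beta u v j b)%:C.
Proof.
move=> bn; rewrite /c_coef.
under eq_bigr do rewrite prod_expand big_distrl /=.
rewrite exchange_big /= mulr_sumr /Eb rmorph_sum big_mkcondr /=.
apply: eq_bigr => a aj.
under eq_bigr do rewrite -mulrA.
rewrite -mulr_sumr mulrCA (@dft_orth R n b (busyT a) bn (@busyT_lt n a j aj)) eq_sym.
by case: (busyT a == b); rewrite ?mulr1 ?mulr0.
Qed.
From mathcomp Require Import ring lra.
Definition Tp {R : realType} (r : R) (M : nat) : {poly R} := \poly_(y < M) (r ^+ y / (y`!)%:R).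

Lemma coef_prodT (R : realType) (M s : nat) (k : nat) (rh : 'I_k -> R) : (s < M)%N ->
  (\prod_(i < k) Tp (rh i) M)`_s = (\sum_(i < k) rh i) ^+ s / (s`!)%:R.
Proof.
elim: k rh s => [|k IH] rh s sM.
  rewrite !big_ord0 coef1 expr0n; case: s sM => [|s] _ /=; last by rewrite mul0r.
  by rewrite fact0 invr1 mulr1.
rewrite big_ord_recr [X in _ = X ^+ _ / _]big_ord_recr /= coefM.
set r := rh ord_max; set rho' := \sum_(i < k) rh (widen_ord (leqnSn k) i).
rewrite [rho' + r]addrC exprDn mulr_suml.
apply: eq_bigr => y _.
have ys : (y <= s)%N by rewrite -ltnS.
rewrite (IH (fun i => rh (widen_ord (leqnSn k) i))); last by rewrite (leq_ltn_trans _ sM) // (leq_ltn_trans (leq_subr _ _)).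
rewrite -/rho'.
rewrite /Tp coef_poly (leq_ltn_trans (leq_subr _ _) sM).
have f0 : forall z, (z`!)%:R != 0 :> R by move=> z; rewrite pnatr_eq0 -lt0n fact_gt0.
have hC : ('C(s, y))%:R = (s`!)%:R / ((y`!)%:R * ((s - y)`!)%:R) :> R.
  by rewrite -(bin_fact ys) !natrM mulfK // mulf_neq0.
rewrite -[_ *+ 'C(s, y)]mulr_natr hC; field.
by rewrite !f0.
Qed.

Lemma sum_x_coef (R : realType) (k M s : nat) (g : 'I_k -> nat -> R) :
  \sum_(x : {ffun 'I_k -> 'I_M} | (\sum_(i < k) (x i : nat))%N == s) \prod_(i < k) g i (x i)
  = (\prod_(i < k) \poly_(y < M) g i y)`_s.
Proof.
have -> : \prod_(i < k) \poly_(y < M) g i y = \prod_(i < k) \sum_(y < M) g i y *: 'X^y.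
  by apply: eq_bigr => i _; rewrite poly_def.
rewrite bigA_distr_bigA /= coef_sum big_mkcond /=.
apply: eq_bigr => x _.
have -> : \prod_(i < k) (g i (x i) *: 'X^(x i)) = (\prod_(i < k) g i (x i)) *: 'X^(\sum_(i < k) (x i : nat)).
  under eq_bigr do rewrite -mul_polyC.
  by rewrite big_split /= prodrXr -rmorph_prod mul_polyC.
by rewrite coefZ coefXn eq_sym; case: eqP; rewrite ?mulr1 ?mulr0.
Qed.

Lemma multinom (R : realType) (k m s : nat) (rh : 'I_k -> R) : (s <= m)%N ->
  \sum_(x : {ffun 'I_k -> 'I_m.+1} | (\sum_(i < k) (x i : nat))%N == s)
     \prod_(i < k) (rh i ^+ x i / ((x i)`!)%:R)
  = (\sum_(i < k) rh i) ^+ s / (s`!)%:R.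
Proof.
move=> sm.
rewrite (@sum_x_coef R k m.+1 s (fun i y => rh i ^+ y / (y`!)%:R)).
by rewrite -(@coef_prodT R m.+1 s k rh).
Qed.

Lemma sum_x_if (R : realType) (k m b : nat) (rh : 'I_k -> R) (F : nat -> R) :
  \sum_(x : {ffun 'I_k -> 'I_m.+1})
     (if (\sum_(i < k) (x i : nat) + b <= m)%N
      then F (\sum_(i < k) (x i : nat))%N * \prod_(i < k) (rh i ^+ x i / ((x i)`!)%:R)
      else 0)
  = if (b <= m)%N then \sum_(s < (m - b).+1) F s * ((\sum_(i < k) rh i) ^+ s / (s`!)%:R)
    else 0.
Proof.
case: leqP => bm; last first.
  apply: big1 => x _; rewrite ifF //; apply/negbTE; rewrite -ltnNge.
  exact: (leq_trans bm (leq_addl _ _)).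
have E1 : forall x : {ffun 'I_k -> 'I_m.+1},
   (if (\sum_(i < k) (x i : nat) + b <= m)%N
      then F (\sum_(i < k) (x i : nat))%N * \prod_(i < k) (rh i ^+ x i / ((x i)`!)%:R)
      else 0)
   = \sum_(s < (m - b).+1) (if (s : nat) == (\sum_(i < k) (x i : nat))%N
        then F s * \prod_(i < k) (rh i ^+ x i / ((x i)`!)%:R) else 0).
  move=> x; rewrite -big_mkcond; rewrite (big_ord1_eq _ (fun s => F s * \prod_(i < k) (rh i ^+ x i / ((x i)`!)%:R))). rewrite addnC -(leq_subRL _ bm) ltnS.
  done.
rewrite (eq_bigr _ (fun x _ => E1 x)) exchange_big /=.
apply: eq_bigr => s _.
rewrite -big_mkcond /= -mulr_sumr.
rewrite (eq_bigl (fun x : {ffun 'I_k -> 'I_m.+1} => (\sum_(i < k) (x i : nat))%N == s)); last by move=> x; rewrite eq_sym.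
rewrite multinom //.
exact: (leq_trans (ltnSE (ltn_ord s)) (leq_subr _ _)).
Qed.

Lemma gen_sum (R : realType) (m n : nat) (alpha beta u v : 'I_n -> R) (j : 'I_n) (H : nat -> R) :
  (forall b, (m < b)%N -> H b = 0) ->
  \sum_(a : {ffun 'I_n -> 'I_3} | a j == Idle) H (busyT a) * Wt alpha beta u v a
  = \sum_(b < (minn n.-1 m).+1) H b * Eb alpha beta u v j b.
Proof.
move=> H0.
have E1 : forall a : {ffun 'I_n -> 'I_3}, a j == Idle ->
   H (busyT a) * Wt alpha beta u v a
   = \sum_(b < (minn n.-1 m).+1) (if (b : nat) == busyT a then H b * Wt alpha beta u v a else 0).
  move=> a aj; rewrite -big_mkcond.
  rewrite (big_ord1_eq _ (fun b => H b * Wt alpha beta u v a)).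
  case: ifP => // hb; rewrite H0 ?mul0r //.
  move/negbT: hb; rewrite ltnS leq_min negb_and -!ltnNge => /orP[|//].
  move=> h1; have h2 := @busyT_lt n a j aj; exfalso; lia.
rewrite (eq_bigr _ E1) /Eb.
under [RHS]eq_bigr do rewrite mulr_sumr.
rewrite exchange_big /=; apply: eq_bigr => b _.
rewrite big_mkcondr /=; apply: eq_bigr => a _.
by rewrite eq_sym.
Qed.

Lemma PIdle_eq (R : realType) (m k n : nat)
  (lam mu : 'I_k -> R) (alpha beta u v : 'I_n -> R) (theta : nat -> R) (j : 'I_n) :
  PIdle m lam mu alpha beta u v theta j
  = Bconst m lam mu alpha beta u v theta *
    \sum_(b < (minn n.-1 m).+1) \sum_(x < (m - b).+1)
      ((\prod_(r < x + b) theta r) * (\sum_(i < k) rho_i lam mu i) ^+ x / (x`!)%:R)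
      * Eb alpha beta u v j b.
Proof.
set B := Bconst _ _ _ _ _ _ _ _.
set rho := \sum_(i < k) rho_i lam mu i.
pose G := fun b => if (b <= m)%N then
   \sum_(s < (m - b).+1) (\prod_(r < s + b) theta r) * (rho ^+ s / (s`!)%:R) else 0.
rewrite /PIdle.
under eq_bigr do rewrite big_mkcond /=.
rewrite exchange_big /=.
have E1 : forall a : {ffun 'I_n -> 'I_3},
  \sum_(x : {ffun 'I_k -> 'I_m.+1})
     (if (busy x a <= m)%N && (a j == Idle) then B * weight lam mu alpha beta u v theta x a else 0)
  = if a j == Idle then B * (G (busyT a) * Wt alpha beta u v a) else 0.
  move=> a; case: (a j == Idle); last by rewrite big1 // => x _; rewrite andbF.
  rewrite /G -(@sum_x_if R k m (busyT a) (rho_i lam mu) (fun s => \prod_(r < s + busyT a) theta r)).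
  rewrite mulr_suml mulr_sumr; apply: eq_bigr => x _.
  rewrite andbT /weight /busy /busyT -/(busyT a).
  case: ifP => _; last by rewrite mul0r mulr0.
  by rewrite /Wt /gW; rewrite -!mulrA; congr (_ * _); rewrite mulrCA.
rewrite (eq_bigr _ (fun a _ => E1 a)) -big_mkcond /= -mulr_sumr; congr (_ * _).
rewrite (@gen_sum R m n alpha beta u v j G); last first.
  by move=> b mb; rewrite /G leqNgt mb.
apply: eq_bigr => b _.
have bm : (b <= m)%N.
  by have := ltn_ord b; rewrite ltnS leq_min => /andP[].
by rewrite /G bm mulr_suml; apply: eq_bigr => s _; rewrite mulrA.
Qed.

Lemma PIdle0_eq (R : realType) (m n : nat)
  (alpha beta u v : 'I_n -> R) (theta : nat -> R) (j : 'I_n) :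
  PIdle0 m alpha beta u v theta j
  = Btilde m alpha beta u v theta *
    \sum_(b < (minn n.-1 m).+1) (\prod_(r < b) theta r) * Eb alpha beta u v j b.
Proof.
pose G := fun b => if (b <= m)%N then \prod_(r < b) theta r else 0.
rewrite /PIdle0 big_mkcond /=.
have E1 : forall a : {ffun 'I_n -> 'I_3},
  (if (busyT a <= m)%N && (a j == Idle) then Btilde m alpha beta u v theta * weight0 alpha beta u v theta a else 0)
  = if a j == Idle then Btilde m alpha beta u v theta * (G (busyT a) * Wt alpha beta u v a) else 0.
  move=> a; case: (a j == Idle); last by rewrite andbF.
  rewrite andbT /G /weight0; case: ifP => _; last by rewrite mul0r mulr0.
  done.
rewrite (eq_bigr _ (fun a _ => E1 a)) -big_mkcond /= -mulr_sumr; congr (_ * _).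
rewrite (@gen_sum R m n alpha beta u v j G); last first.
  by move=> b mb; rewrite /G leqNgt mb.
apply: eq_bigr => b _.
have bm : (b <= m)%N.
  by have := ltn_ord b; rewrite ltnS leq_min => /andP[].
by rewrite /G bm.
Qed.

Theorem lemma3 (R : realType) (m k n : nat)
  (lam mu : 'I_k -> R) (alpha beta u v : 'I_n -> R) (theta : nat -> R) :
  (1 <= m)%N -> (1 <= k)%N -> (1 <= n)%N ->
  (forall i, 0 < lam i) -> (forall i, 0 < mu i) ->
  (forall j, 0 < alpha j) -> (forall j, 0 < beta j) ->
  (forall j, 0 < u j) -> (forall j, 0 < v j) ->
  (forall r, (r <= m)%N -> 0 <= theta r <= 1) ->
  (forall b, (b < m)%N -> 0 < theta b) ->
  theta m = 0 ->
  let rho := \sum_(i < k) rho_i lam mu i in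
  forall j : 'I_n,
    (PIdle m lam mu alpha beta u v theta j)%:C
      = (Bconst m lam mu alpha beta u v theta)%:C
        * \sum_(b < (minn n.-1 m).+1) \sum_(x < (m - b).+1)
            ((\prod_(r < x + b) theta r) * rho ^+ x / (x`!)%:R)%:C
            * c_coef alpha beta u v j b
    /\
    (PIdle0 m alpha beta u v theta j)%:C
      = (Btilde m alpha beta u v theta)%:C
        * \sum_(b < (minn n.-1 m).+1)
            (\prod_(r < b) theta r)%:C * c_coef alpha beta u v j b.
Proof.
move=> _ _ n1 _ _ _ _ _ _ _ _ _ rho j.
have hc : forall b : 'I_(minn n.-1 m).+1, c_coef alpha beta u v j b = (Eb alpha beta u v j b)%:C.
  move=> b; apply: c_coefE.
  have := ltn_ord b; rewrite ltnS leq_min => /andP[h _].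
  by apply: (leq_ltn_trans h); rewrite prednK.
split.
  rewrite PIdle_eq rmorphM /=; congr (_ * _).
  rewrite rmorph_sum /=; apply: eq_bigr => b _.
  rewrite rmorph_sum /= hc; apply: eq_bigr => x _.
  by rewrite rmorphM.
rewrite PIdle0_eq rmorphM /=; congr (_ * _).
rewrite rmorph_sum /=; apply: eq_bigr => b _.
by rewrite hc rmorphM.
Qed.
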